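(* Let $k$ and $d$ be positive integers. Let $G$ be a simple undirected graph and let $v$ be a vertex of $G$ that has at least $R(k+2,d)$ neighbours which are pairwise non-adjacent in $G$. Suppose $G$ can be represented as the intersection graph of an arrangement $\mathcal{R}$ of axis-aligned hypercubes in $\mathbb{R}^d$, with $f\colon V(G)\to\mathcal{R}$ the corresponding bijection (so that for distinct vertices $u,u'$, $uu'\in E(G)$ if and only if $f(u)\cap f(u')\neq\emptyset$). Then there is a neighbour $w$ of $v$ such that the hypercube $f(w)$ is more than $k$ times smaller than $f(v)$, i.e. $k\cdot s(f(w)) < s(f(v))$, where $s(\cdot)$ denotes the side length of a hypercube.
   Context: $R(k,d)$ denotes the Ramsey number: the smallest integer $N$ such that every colouring of the edges of the complete graph on $N$ vertices with $d$ colours contains a monochromatic clique on $k$ vertices. An axis-aligned hypercube in $\mathbb{R}^d$ is a set of the form $\prod_{c=1}^d [p_c, p_c+s]$ with $s>0$. *)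

(* Defs.v *)
From HB Require Import structures.
From mathcomp Require Import all_boot all_order all_algebra.
From mathcomp Require Import reals.
Set Implicit Arguments. Unset Strict Implicit. Unset Printing Implicit Defensive.
Import Order.TTheory GRing.Theory Num.Theory.
Local Open Scope ring_scope.

(* Ramsey property: every colouring with [d] colours of the edges of the
   complete graph on 'I_N contains a monochromatic clique on [k] vertices.
   An edge {i,j} with i < j gets colour [c i j]. *)
Definition ramsey_prop (k d N : nat) : Prop :=
  forall c : 'I_N -> 'I_N -> 'I_d,
    exists (S : {set 'I_N}) (col : 'I_d),
      #|S| = k /\
      (forall i j, i \in S -> j \in S -> (i < j)%N -> c i j = col).

Definition is_ramsey_number (k d N : nat) : Prop :=
  ramsey_prop k d N /\ (forall M, ramsey_prop k d M -> (N <= M)%N).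

Definition in_cube (R : realType) (d : nat) (p : 'I_d -> R) (s : R)
  (x : 'I_d -> R) : Prop :=
  forall c : 'I_d, p c <= x c <= p c + s.

Definition simple_graph (T : finType) (e : rel T) : Prop :=
  symmetric e /\ irreflexive e.

(* Main.v *)
Require Import Defs.
From HB Require Import structures.
From mathcomp Require Import all_boot all_order all_algebra.
From mathcomp Require Import reals.
From mathcomp Require Import lra.
Import Order.TTheory GRing.Theory Num.Theory.
Local Open Scope ring_scope.

Section OneD.
Variable R : realType.

Lemma argmax_seq (I : eqType) (f : I -> R) (s : seq I) :
  s != [::] -> exists2 j, j \in s & forall i, i \in s -> f i <= f j.
Proof.
elim: s => [//|y s IH] _.
case: s IH => [|z s] IH.
  by exists y; [rewrite inE eqxx | move=> i; rewrite inE => /eqP->].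
have [j js Hj] := IH isT.
case: (lerP (f y) (f j)) => H.
  exists j; first by rewrite inE js orbT.
  by move=> i; rewrite inE => /orP [/eqP->|/Hj].
exists y; first by rewrite inE eqxx.
by move=> i; rewrite inE => /orP [/eqP->//|/Hj Hi]; apply: le_trans Hi (ltW H).
Qed.

Lemma argmax_set (I : finType) (f : I -> R) (M : {set I}) (x0 : I) :
  x0 \in M -> exists2 j, j \in M & forall i, i \in M -> f i <= f j.
Proof.
move=> Hx; have [j Hj H] : exists2 j, j \in enum M & forall i, i \in enum M -> f i <= f j.
  by apply: argmax_seq; case: (enum M) (mem_enum M x0) => //; rewrite Hx.
by exists j; [rewrite -mem_enum | move=> i Hi; apply: H; rewrite mem_enum].
Qed.

Lemma set_nonempty (I : finType) (M : {set I}) n : #|M| = n.+1 -> exists x, x \in M.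
Proof.
move=> H; case: (set_0Vmem M) => [E|[x Hx]]; last by exists x.
by move: H; rewrite E cards0.
Qed.

Arguments set_nonempty {I M n}.
Arguments argmax_set {I} f {M x0}.

Definition sep (I : Type) (a l : I -> R) (i j : I) :=
  (a i + l i < a j) || (a j + l j < a i).
Arguments sep {I}.

Lemma pack (I : finType) (a l : I -> R) : (forall i, 0 <= l i) ->
  forall n (M : {set I}) lo hi, #|M| = n.+1 ->
  (forall i j, i \in M -> j \in M -> i != j -> sep a l i j) ->
  (forall i, i \in M -> lo < a i /\ a i + l i <= hi) ->
  \sum_(i in M) l i < hi - lo.
Proof.
move=> l0; elim=> [|n IH] M lo hi HM Hsep Hin.
  have [x Hx] := set_nonempty HM.
  have [j Hj _] := argmax_set a Hx.
  rewrite (bigD1 j) //= big1; last first.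
    move=> i /andP [Hi Hij].
    have : #|M :\ j| = 0%N by move: (cardsD1 j M); rewrite HM Hj add1n => -[->].
    move/cards0_eq => E; move: (E) => _; have : i \in M :\ j by rewrite in_setD1 Hij Hi.
    by rewrite E inE.
  have := Hin j Hj; lra.
have [x Hx] := set_nonempty HM.
have [j Hj Hmax] := argmax_set a Hx.
rewrite (bigD1 j) //=.
have HM' : #|M :\ j| = n.+1 by move: (cardsD1 j M); rewrite HM Hj add1n => -[->].
have := IH (M :\ j) lo (a j) HM'.
rewrite (eq_bigl (fun i => i \in M :\ j)); last by move=> i; rewrite in_setD1 andbC.
move=> H; have := Hin j Hj => -[Hj1 Hj2].
suff : \sum_(i in M :\ j) l i < a j - lo by lra.
apply: H.
  by move=> i i' /setD1P [_ Hi] /setD1P [_ Hi']; apply: Hsep.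
move=> i /setD1P [Hij Hi]; split; first by case: (Hin i Hi).
have := Hsep i j Hi Hj Hij; rewrite /sep => /orP [H|H]; first exact: ltW.
have := Hmax i Hi; have := l0 j; lra.
Qed.

Lemma oneD (I : finType) (A : {set I}) (a l : I -> R) (P L : R) (k : nat) :
  (0 < k)%N -> #|A| = (k + 2)%N -> (forall i, 0 <= l i) ->
  (forall i j, i \in A -> j \in A -> i != j -> sep a l i j) ->
  (forall i, i \in A -> a i <= P + L /\ P <= a i + l i) ->
  (forall i, i \in A -> L <= k%:R * l i) -> False.
Proof.
move=> k0 HA l0 Hsep Hin HL.
have [x Hx] := set_nonempty (n := (k+1)%N) (etrans HA (addnS _ _)).
have [i0 Hi0 Hmin] := argmax_set (fun i => - a i) Hx.
have HA1 : #|A :\ i0| = k.+1 by move: (cardsD1 i0 A); rewrite HA Hi0 addn2 add1n => -[].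
have [y Hy] := set_nonempty HA1.
have [i1 Hi1 Hmax] := argmax_set a Hy.
have HM : #|A :\ i0 :\ i1| = k.-1.+1.
  by move: (cardsD1 i1 (A :\ i0)); rewrite HA1 Hi1 add1n prednK // => -[].
have Hs := pack _ _ _ l0 _ _ (a i0 + l i0) (a i1) HM.

have Hlt : \sum_(i in A :\ i0 :\ i1) l i < a i1 - (a i0 + l i0).
  apply: Hs.
    move=> i j /setD1P [_ /setD1P [_ Hi]] /setD1P [_ /setD1P [_ Hj]].
    exact: Hsep.
  move=> i /setD1P [Hii1 /setD1P [Hii0 Hi]]; split.
    have := Hmin i Hi; have := l0 i.
    have := Hsep i0 i Hi0 Hi; rewrite eq_sym Hii0 => /(_ isT); rewrite /sep.
    move=> /orP [H|H]; lra.
  have Hi' : i \in A :\ i0 by rewrite in_setD1 Hii0 Hi.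
  move/setD1P: (Hi1) => [_ Hi1A].
  have := Hmax i Hi'; have := l0 i1.
  have := Hsep i i1 Hi Hi1A Hii1; rewrite /sep.
  move=> /orP [H|H]; lra.
move/setD1P: (Hi1) => [_ Hi1A].
have := Hin i1 Hi1A; have := Hin i0 Hi0 => -[_ H0] [H1 _].
have Hk : L *+ k <= k%:R * \sum_(i in A :\ i0 :\ i1) l i.
  rewrite mulr_sumr (_ : L *+ k = \sum_(i in A :\ i0 :\ i1) L); last by rewrite sumr_const HM prednK.
  apply: ler_sum => i /setD1P [_ /setD1P [_ Hi]]; exact: HL.
move: Hk Hlt; rewrite -mulr_natr.
have : (0 : R) < k%:R by rewrite ltr0n.
set K := k%:R; set S := \sum_(i in _) _.
move=> HK Hk Hlt.
have : S < L by lra.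
nra.
Qed.
End OneD.

Theorem lemma5 (R : realType) (k d N : nat) (T : finType) (e : rel T)
  (p : T -> 'I_d -> R) (s : T -> R) (v : T) :
  (0 < k)%N -> (0 < d)%N ->
  simple_graph e ->
  is_ramsey_number (k + 2) d N ->
  (exists S : {set T},
      (N <= #|S|)%N /\ (forall u, u \in S -> e v u) /\
      (forall u u', u \in S -> u' \in S -> ~~ e u u')) ->
  (forall u, 0 < s u) ->
  (* f : u |-> cube (p u) (s u) is injective (a bijection onto the arrangement) *)
  (forall u u', (forall x, in_cube (p u) (s u) x <-> in_cube (p u') (s u') x) ->
     u = u') ->
  (forall u u', u != u' ->
     (e u u' <-> exists x, in_cube (p u) (s u) x /\ in_cube (p u') (s u') x)) ->
  exists w, e v w /\ k%:R * s w < s v.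
Proof.
move=> k0 d0 [esym eirr] [HR _] [S [HN [HSv HSind]]] s0 _ Hcube.
pose d1 : 'I_d := Ordinal d0.
pose g (i : 'I_N) : T := nth v (enum S) i.
have gS : forall i, g i \in S.
  move=> i; rewrite -mem_enum; apply: mem_nth; rewrite -cardE.
  exact: leq_trans (ltn_ord i) HN.
have ginj : forall i j, g i = g j -> i = j.
  move=> i j /eqP; rewrite nth_uniq ?enum_uniq // -?cardE.
  - by move=> /eqP E; apply: val_inj.
  - exact: leq_trans (ltn_ord i) HN.
  - exact: leq_trans (ltn_ord j) HN.
pose sepc u u' c := (p u c + s u < p u' c) || (p u' c + s u' < p u c).
have exsep : forall u u', u \in S -> u' \in S -> u != u' -> exists c, sepc u u' c.
  move=> u u' Hu Hu' Huu'.
  case: (pickP (sepc u u')) => [c Hc|Hn]; first by exists c.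
  exfalso; move: (HSind u u' Hu Hu') => /negP; apply; apply/(Hcube u u' Huu').
  exists (fun c => Num.max (p u c) (p u' c)).
  have H : forall c, p u' c <= p u c + s u /\ p u c <= p u' c + s u'.
    by move=> c; have := Hn c; rewrite /sepc => /norP [h1 h2]; rewrite -!leNgt in h1 h2.
  split=> c; have := H c; have := s0 u; have := s0 u';
    rewrite /= /Num.max; case: (ltP (p u c) (p u' c)) => h; move=> *; apply/andP; split; lra.
pose col_f (i j : 'I_N) := odflt d1 [pick c | sepc (g i) (g j) c].
have [S' [col [HS' Hcol]]] := HR col_f.
have key : forall i j, i \in S' -> j \in S' -> (i < j)%N -> sepc (g i) (g j) col.
  move=> i j Hi Hj Hlt; have := Hcol i j Hi Hj Hlt; rewrite /col_f.
  case: pickP => [c Hc /= <-|Hn _] //; exfalso.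
  have [|c Hc] := exsep (g i) (g j) (gS i) (gS j).
    by apply/eqP => /ginj E; rewrite E ltnn in Hlt.
  by rewrite Hn in Hc.
have Hsep' : forall i j, i \in S' -> j \in S' -> i != j -> sepc (g i) (g j) col.
  move=> i j Hi Hj; case: (ltngtP i j) => [Hlt _|Hlt _|/val_inj ->].
  - exact: key.
  - by rewrite /sepc orbC; apply: key.
  - by rewrite eqxx.
case: (pickP (fun w => e v w && (k%:R * s w < s v))) => [w /andP [H1 H2]|Hn].
  by exists w; split.
exfalso.
apply: (@oneD R _ S' (fun i => p (g i) col) (fun i => s (g i)) (p v col) (s v) k k0 HS').
- by move=> i; apply: ltW.
- exact: Hsep'.
- move=> i Hi.
  have Hne : v != g i by apply/eqP => E; move: (HSv _ (gS i)); rewrite -E eirr.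
  have [x [Hx1 Hx2]] := (Hcube v (g i) Hne).1 (HSv _ (gS i)).
  have /andP [] := Hx1 col; have /andP [] := Hx2 col; move=> *; split; lra.
- move=> i Hi; have := Hn (g i); rewrite HSv ?gS //= => /negbT; rewrite -leNgt //.
Qed.
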